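(* Let $\kappa\ge2$, and let $\psi^+$ be a rooted binary topological tree on a taxon set $X$ with $|X|\ge 2$. Let $\psi_A^+$ and $\psi_B^+$ be the rooted subtrees descending from the two children of the root, on taxon sets $A$ and $B$ respectively, so $X=A\sqcup B$ and $\psi^+=(\psi_A^+,\psi_B^+)$. Then $$c_\kappa(\psi^+)=c_\kappa(\psi_A^+)\,c_\kappa(\psi_B^+)-\binom{\kappa}{2}.$$
   Context: For a rooted binary topological tree $\psi^+$ on a taxon set $X$ and $\kappa\ge2$, consider real $|X|$-way $\kappa\times\cdots\times\kappa$ tensors $P$ with one index per taxon. For $Y\subseteq X$, $P_Y$ is the marginalization (sum over indices of taxa not in $Y$); $\psi^+|_Y$ is the induced rooted subtree; a 2-clade is a pair of leaves that are exactly the leaf descendants of some vertex. Let $L(\psi^+)\subseteq\mathbb R^{\kappa^{|X|}}$ be the linear space of all real tensors $P$ such that for every $Y\subseteq X$ and every 2-clade $\{a,b\}$ of $\psi^+|_Y$, $P_Y$ is invariant under exchanging the $a$ and $b$ indices, and let $c_\kappa(\psi^+)=\dim L(\psi^+)$. (Equivalently $c_\kappa(\psi^+)=d_\kappa(\psi^+)+1$, where $d_\kappa(\psi^+)$ is the dimension of the affine space of such tensors whose entries sum to 1, the affine closure of the UE model.) For a tree with a single leaf, $L$ is all of $\mathbb R^\kappa$, so $c_\kappa=\kappa$. *)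

(* Defs.v *)
From HB Require Import structures.
From mathcomp Require Import all_boot all_order all_algebra.
From mathcomp Require Import all_fingroup reals.
Set Implicit Arguments. Unset Strict Implicit. Unset Printing Implicit Defensive.
Import Order.TTheory GRing.Theory Num.Theory.
Local Open Scope ring_scope.

(* A tree "on taxon set X" is a tree with pairwise distinct leaf labels whose
   leaf-label set is X. *)
Inductive rtree (T : Type) : Type :=
| Leaf of T
| Node of rtree T & rtree T.
Arguments Leaf {T}.
Arguments Node {T}.

Fixpoint leaves {T : Type} (t : rtree T) : seq T :=
  match t with
  | Leaf x => [:: x]
  | Node l r => leaves l ++ leaves r
  end.

Section Trees.
Variable T : finType.

Definition taxa_set (t : rtree T) : {set T} := [set x in leaves t].

(* induced rooted subtree psi|_Y (degree-two vertices suppressed);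
   None when Y contains no leaf of t *)
Fixpoint restrict (Y : {set T}) (t : rtree T) : option (rtree T) :=
  match t with
  | Leaf x => if x \in Y then Some (Leaf x) else None
  | Node l r =>
      match restrict Y l, restrict Y r with
      | Some l', Some r' => Some (Node l' r')
      | Some l', None => Some l'
      | None, Some r' => Some r'
      | None, None => None
      end
  end.

(* {a, b} is a 2-clade of t: some vertex has exactly a and b as leaf
   descendants (in a binary tree, such a vertex is a cherry). *)
Fixpoint is_2clade (t : rtree T) (a b : T) : bool :=
  match t with
  | Leaf _ => false
  | Node l r =>
      [|| match l, r with
          | Leaf x, Leaf y => ((x == a) && (y == b)) || ((x == b) && (y == a))
          | _, _ => false
          end, is_2clade l a b | is_2clade r a b]
  end.

Definition is_2clade_opt (t : option (rtree T)) (a b : T) : bool :=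
  if t is Some t' then is_2clade t' a b else false.

Variable R : realType.
Variable k : nat.

Definition taxon (X : {set T}) := {x : T | x \in X}.

Definition index_of (X : {set T}) := {ffun taxon X -> 'I_k}.
Definition tensor (X : {set T}) := {ffun index_of X -> R^o}.

(* marginalization P_Y evaluated at the Y-part of the multi-index w *)
Definition marg (X : {set T}) (P : tensor X) (Y : {set T}) (w : index_of X) : R :=
  \sum_(u : index_of X | [forall x : taxon X, (val x \in Y) ==> (u x == w x)]) P u.

Definition swap_idx (X : {set T}) (a b : taxon X) (w : index_of X) : index_of X :=
  [ffun x => w (tperm a b x)].

Definition sym_defect (X : {set T}) (c : {set T} * taxon X * taxon X * index_of X)
  (P : tensor X) : R^o :=
  let: (Y, a, b, w) := c in marg P Y w - marg P Y (swap_idx a b w).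

Definition is_constraint (t : rtree T)
  (c : {set T} * taxon (taxa_set t) * taxon (taxa_set t) * index_of (taxa_set t)) : bool :=
  let: (Y, a, b, w) := c in
  [&& Y \subset taxa_set t, val a \in Y, val b \in Y &
      is_2clade_opt (restrict Y t) (val a) (val b)].

Definition Lspace (t : rtree T) : {vspace tensor (taxa_set t)} :=
  (\bigcap_(c | @is_constraint t c) lker (linfun (@sym_defect (taxa_set t) c)))%VS.

Definition c_kappa (t : rtree T) : nat := \dim (Lspace t).

End Trees.

(* Main.v *)
Require Import Defs.
From HB Require Import structures.
From mathcomp Require Import all_boot all_order all_algebra.
From mathcomp Require Import all_fingroup reals ring.
Set Implicit Arguments. Unset Strict Implicit. Unset Printing Implicit Defensive.
Import GRing.Theory.
Local Open Scope ring_scope.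

Lemma linfunE' (K : fieldType) (aT rT : vectType K) (f : aT -> rT) (hf : linear f) v :
  linfun f v = f v.
Proof.
pose fL : {linear _ -> _} := HB.pack f (GRing.isLinear.Build _ _ _ _ f hf).
exact: (lfunE fL).
Qed.

Lemma memv_bigcapP (K : fieldType) (vT : vectType K) (I : finType) (P : pred I)
   (Us : I -> {vspace vT}) v :
  reflect (forall i, P i -> v \in Us i) (v \in (\bigcap_(i | P i) Us i)%VS).
Proof.
rewrite memvE; apply: (iffP subv_bigcapP) => H i Pi; first by rewrite memvE H.
by rewrite -memvE H.
Qed.

Section TensDim.
Variables (K : fieldType) (I J : finType).
Local Notation VI := {ffun I -> K^o}.
Local Notation VJ := {ffun J -> K^o}.
Local Notation VM := {ffun (I * J)%type -> K^o}.

Definition colf (j : J) (M : VM) : VI := [ffun i => M (i, j)].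
Definition rowf (i : I) (M : VM) : VJ := [ffun j => M (i, j)].
Lemma colf_lin j : linear (colf j).
Proof. by move=> a u v; apply/ffunP => i; rewrite !ffunE. Qed.
Lemma rowf_lin i : linear (rowf i).
Proof. by move=> a u v; apply/ffunP => j; rewrite !ffunE. Qed.

Definition Wsp (U : {vspace VI}) (V : {vspace VJ}) : {vspace VM} :=
 ((\bigcap_(j : J) (linfun (colf j) @^-1: U)) :&: (\bigcap_(i : I) (linfun (rowf i) @^-1: V)))%VS.

Lemma memWP (U : {vspace VI}) (V : {vspace VJ}) M : reflect ((forall j, colf j M \in U) /\ (forall i, rowf i M \in V)) (M \in Wsp U V).
Proof.
apply: (iffP memv_capP) => [[/memv_bigcapP H1 /memv_bigcapP H2]|[H1 H2]]; split.
- by move=> j; have := H1 j isT; rewrite -memv_preim linfunE' //; apply: colf_lin.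
- by move=> i; have := H2 i isT; rewrite -memv_preim linfunE' //; apply: rowf_lin.
- by apply/memv_bigcapP => j _; rewrite -memv_preim linfunE' //; apply: colf_lin.
- by apply/memv_bigcapP => i _; rewrite -memv_preim linfunE' //; apply: rowf_lin.
Qed.

Lemma dimW (U : {vspace VI}) (V : {vspace VJ}) : \dim (Wsp U V) = (\dim U * \dim V)%N.
Proof.
set p := \dim U; set q := \dim V.
set al := vbasis U; set be := vbasis V.
have alU (a : 'I_p) : al`_a \in U.
  by apply: vbasis_mem; apply: mem_nth; rewrite size_tuple.
have beV (b : 'I_q) : be`_b \in V.
  by apply: vbasis_mem; apply: mem_nth; rewrite size_tuple.
have frA : free al by apply: basis_free (vbasisP U).
have frB : free be by apply: basis_free (vbasisP V).
pose Psi (C : {ffun ('I_p * 'I_q)%type -> K^o}) : VM :=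
  [ffun ij => \sum_(a < p) \sum_(b < q) C (a, b) * al`_a ij.1 * be`_b ij.2].
have linPsi : linear Psi.
  move=> c u v; apply/ffunP => ij; rewrite !ffunE scaler_sumr -big_split.
  apply: eq_bigr => a _; rewrite scaler_sumr -big_split; apply: eq_bigr => b _.
  by rewrite !ffunE /= mulrDl mulrDl; congr (_ + _); rewrite /GRing.scale /= !mulrA.
have PsiE C : linfun Psi C = Psi C by apply: linfunE'.
have injPsi : lker (linfun Psi) == 0%VS.
  apply/lker0P => C1 C2; rewrite !PsiE => eqP12.
  suff H : forall C, Psi C = 0 -> C = 0.
    have := linPsi (-1) C2 C1; rewrite !scaleN1r eqP12 addNr => /H E; apply/eqP; rewrite -subr_eq0 addrC; apply/eqP. by [].
  move=> C PC; apply/ffunP => [[a b]]; rewrite ffunE.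
  have H1 : forall j a, \sum_(b < q) C (a, b) * be`_b j = 0.
    move=> j; move/freeP: frA; apply; apply/ffunP => i0.
    transitivity (Psi C (i0, j)); last by rewrite PC !ffunE.
    rewrite sum_ffunE !ffunE /=; apply: eq_bigr => a' _.
    rewrite ffunE /GRing.scale /= mulr_suml; apply: eq_bigr => b' _.
    by rewrite mulrAC.
  move/freeP: frB => Hf; apply: (Hf (fun b => C (a, b))); apply/ffunP => j.
  rewrite sum_ffunE ffunE -[RHS](H1 j a); apply: eq_bigr => b' _.
  by rewrite ffunE.
have imPsi : (linfun Psi @: fullv)%VS = Wsp U V.
  apply/vspaceP => M; apply/memv_imgP/memWP.
  - case=> C _ ->; rewrite PsiE; split.
    + move=> j.
      have -> : colf j (Psi C) = \sum_(a < p) (\sum_(b < q) C (a, b) * be`_b j) *: al`_a.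
        apply/ffunP => i; rewrite sum_ffunE !ffunE /=; apply: eq_bigr => a _.
        rewrite ffunE /GRing.scale /= mulr_suml; apply: eq_bigr => b _.
        by rewrite mulrAC.
      by apply: memv_suml => a _; apply: memvZ.
    + move=> i.
      have -> : rowf i (Psi C) = \sum_(b < q) (\sum_(a < p) C (a, b) * al`_a i) *: be`_b.
        apply/ffunP => j; rewrite sum_ffunE !ffunE /= exchange_big; apply: eq_bigr => b _.
        rewrite ffunE /GRing.scale /= mulr_suml; apply: eq_bigr => a _.
        by [].
      by apply: memv_suml => b _; apply: memvZ.
  - case=> HU HV.
    pose delta (i : I) : VI := [ffun i' => (i' == i)%:R].
    pose cf (a : 'I_p) : VJ := [ffun j => coord al a (colf j M)].
    have cfV a : cf a \in V.
      have -> : cf a = \sum_(i : I) coord al a (delta i) *: rowf i M.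
        apply/ffunP => j; rewrite sum_ffunE ffunE.
        have -> : colf j M = \sum_(i : I) M (i, j) *: delta i.
          apply/ffunP => i; rewrite sum_ffunE ffunE (bigD1 i) //= big1 => [|i' ne].
            by rewrite !ffunE eqxx /GRing.scale /= mulr1 addr0.
          by rewrite !ffunE eq_sym (negbTE ne) /GRing.scale /= mulr0.
        rewrite raddf_sum; apply: eq_bigr => i _; rewrite /= linearZ /= !ffunE.
        by rewrite /GRing.scale /= mulrC.
      by apply: memv_suml => i _; apply: memvZ.
    exists [ffun ab : ('I_p * 'I_q)%type => coord be ab.2 (cf ab.1)]; first exact: memvf.
    rewrite PsiE; apply/ffunP => [[i j]]; rewrite ffunE /=.
    have := congr1 (fun f : VI => f i) (coord_vbasis (HU j)); rewrite sum_ffunE ffunE => ->.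
    apply: eq_bigr => a _.
    have := congr1 (fun f : VJ => f j) (coord_vbasis (cfV a)); rewrite sum_ffunE ffunE => E.
    rewrite ffunE /GRing.scale /= E mulr_suml; apply: eq_bigr => b _.
    by rewrite !ffunE /GRing.scale /= mulrAC.
rewrite -imPsi limg_dim_eq; last by rewrite (eqP injPsi) capv0.
by rewrite dimvf /dim /= muln1 card_prod !card_ord.
Qed.
End TensDim.

Section TreeLemmas.
Variable T : finType.
Implicit Types (t l r : rtree T) (Y : {set T}).

Definition ropt_leaves (o : option (rtree T)) := if o is Some t then leaves t else [::].

Lemma restrict_leaves Y t : ropt_leaves (restrict Y t) = [seq x <- leaves t | x \in Y].
Proof.
elim: t => [x|l IHl r IHr] /=; first by case: ifP.
rewrite filter_cat -IHl -IHr.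
by case: (restrict Y l) => [l'|]; case: (restrict Y r) => [r'|] //=; rewrite cats0.
Qed.

Lemma size_leaves t : (0 < size (leaves t))%N.
Proof. by elim: t => [x|l IHl r IHr] //=; rewrite size_cat addn_gt0 IHl. Qed.

Lemma single_leaf t x : leaves t = [:: x] -> t = Leaf x.
Proof.
case: t => [y|l r] /=; first by case=> ->.
move=> E; have := congr1 size E; rewrite size_cat /=.
by have := size_leaves l; have := size_leaves r; case: (size (leaves l)) => [|[|n]] //; case: (size (leaves r)).
Qed.

Lemma two_leaves t x y : leaves t = [:: x; y] -> t = Node (Leaf x) (Leaf y).
Proof.
case: t => [z|l r] //=.
have := size_leaves l; have := size_leaves r.
case El: (leaves l) => [|x1 [|x2 s]] //= _ _.
  by case=> <- Er; rewrite (single_leaf El) (single_leaf Er).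
case=> _ _ E; have := congr1 size E; rewrite size_cat /=.
move=> /eqP; rewrite addn_eq0 => /andP[_ /eqP H]; by have := size_leaves r; rewrite H.
Qed.

Lemma restrict_single Y t x :
  [seq y <- leaves t | y \in Y] = [:: x] -> restrict Y t = Some (Leaf x).
Proof.
rewrite -restrict_leaves; case: (restrict Y t) => [t'|] //= /single_leaf -> //.
Qed.

Lemma restrict_two Y t x y :
  [seq z <- leaves t | z \in Y] = [:: x; y] -> restrict Y t = Some (Node (Leaf x) (Leaf y)).
Proof.
rewrite -restrict_leaves; case: (restrict Y t) => [t'|] //= /two_leaves -> //.
Qed.

Lemma is_2clade_mem t a b : is_2clade t a b -> (a \in leaves t) && (b \in leaves t).
Proof.
elim: t => [x|l IHl r IHr] //=.
case/or3P => [H|/IHl|/IHr]; rewrite !mem_cat.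
- case: l H {IHl} => [x|l1 l2] //; case: r {IHr} => [y|r1 r2] //=.
  by case/orP => /andP[/eqP <- /eqP <-]; rewrite !inE !eqxx ?orbT.
- by case/andP => -> ->.
- by case/andP => -> ->; rewrite !orbT.
Qed.

Lemma mem_restrict Y t t' x : restrict Y t = Some t' -> x \in leaves t' ->
  (x \in Y) && (x \in leaves t).
Proof.
move=> E; have := restrict_leaves Y t; rewrite E /= => ->.
by rewrite mem_filter.
Qed.

Lemma eq_restrict Y Y' t : (forall x, x \in leaves t -> (x \in Y) = (x \in Y')) ->
  restrict Y t = restrict Y' t.
Proof.
elim: t => [x|l IHl r IHr] /= H; first by rewrite H // mem_seq1.
rewrite IHl; last by move=> x xin; apply: H; rewrite mem_cat xin.
by rewrite IHr // => x xin; apply: H; rewrite mem_cat xin orbT.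
Qed.

Lemma clade_node_l Y l r a b :
  is_2clade_opt (restrict Y l) a b -> is_2clade_opt (restrict Y (Node l r)) a b.
Proof.
rewrite /=; case: (restrict Y l) => // l'; case: (restrict Y r) => [r'|] //= ->.
by rewrite orbT.
Qed.

Lemma clade_node_r Y l r a b :
  is_2clade_opt (restrict Y r) a b -> is_2clade_opt (restrict Y (Node l r)) a b.
Proof.
rewrite /=; case: (restrict Y r) => // r'; case: (restrict Y l) => [l'|] //= ->.
by rewrite !orbT.
Qed.

Lemma clade_node_inv Y l r a b :
  is_2clade_opt (restrict Y (Node l r)) a b ->
  [\/ is_2clade_opt (restrict Y l) a b, is_2clade_opt (restrict Y r) a b,
      restrict Y l = Some (Leaf a) /\ restrict Y r = Some (Leaf b) |
      restrict Y l = Some (Leaf b) /\ restrict Y r = Some (Leaf a)].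
Proof.
rewrite /=; case: (restrict Y l) => [l'|]; case: (restrict Y r) => [r'|] //=;
  try by move=> H; first [exact: Or41 H | exact: Or42 H].
case/or3P => [H|H|H]; [|exact: Or41|exact: Or42].
case: l' H => [x|? ?] //; case: r' => [y|? ?] //.
by case/orP => /andP[/eqP <- /eqP <-]; [apply: Or43 | apply: Or44].
Qed.

Lemma cherry_clade (x y a b : T) : a \in [:: x; y] -> b \in [:: x; y] -> a != b ->
  is_2clade (Node (Leaf x) (Leaf y)) a b.
Proof.
rewrite /= !inE => /orP[]/eqP-> /orP[]/eqP->; rewrite ?eqxx ?orbT ?andbT //=.
Qed.

End TreeLemmas.

Lemma sum_partition (R : nmodType) (I J : finType) (p : I -> J) (Q : pred J) (C : pred I) (F : I -> R) :
  \sum_(j | Q j) \sum_(i | C i && (p i == j)) F i = \sum_(i | C i && Q (p i)) F i.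
Proof.
rewrite [RHS](partition_big p Q) => [|i /andP[]//].
apply: eq_bigr => j Qj; apply: eq_bigl => i.
by case E: (p i == j); rewrite ?andbT ?andbF // (eqP E) Qj andbT.
Qed.

Lemma sum_ind (R : pzSemiRingType) (I : finType) (C : pred I) (i0 : I) :
  \sum_(i | C i) ((i == i0)%:R : R) = (C i0)%:R.
Proof.
rewrite big_mkcond (bigD1 i0) //= big1 => [|i /negbTE ->]; last by case: (C i).
by rewrite eqxx addr0; case: (C i0).
Qed.

Lemma tperm_inj (U V : finType) (f : U -> V) (finj : injective f) a b x :
  f (tperm a b x) = tperm (f a) (f b) (f x).
Proof.
case: (tpermP a b x) => [->|->|xa xb]; first by rewrite tpermL.
  by rewrite tpermR.
rewrite tpermD //; apply/negP => /eqP /finj E; first [exact: xa E | exact: xa (esym E) | exact: xb E | exact: xb (esym E)].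
Qed.

Section Generic.
Variables (T : finType) (R : realType) (k : nat).

Definition incl (A X : {set T}) (h : A \subset X) (x : taxon A) : taxon X :=
  exist (fun z => z \in X) (val x) (subsetP h _ (valP x)).

Lemma incl_inj (A X : {set T}) (h : A \subset X) : injective (incl h).
Proof. by move=> x y E; apply: val_inj; exact: (congr1 val E). Qed.

Definition proj (A X : {set T}) (h : A \subset X) (w : index_of k X) : index_of k A :=
  [ffun x => w (incl h x)].

Definition agree (Z : {set T}) (Y : {set T}) (u w : index_of k Z) :=
  [forall x : taxon Z, (val x \in Y) ==> (u x == w x)].

Lemma margE (Z : {set T}) (P : tensor R k Z) Y w : marg P Y w = \sum_(u | agree Y u w) P u.
Proof. by []. Qed.

Lemma agree_eq (Z Y Y' : {set T}) : (forall x : taxon Z, (val x \in Y) = (val x \in Y')) ->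
  @agree Z Y =2 @agree Z Y'.
Proof. by move=> H u w; apply: eq_forallb => x; rewrite H. Qed.

Lemma margI (Z : {set T}) (P : tensor R k Z) Y w : marg P (Y :&: Z) w = marg P Y w.
Proof.
rewrite !margE; apply: eq_bigl => u; rewrite (@agree_eq Z (Y :&: Z) Y) // => x.
by rewrite in_setI (valP x) andbT.
Qed.

Lemma incl_surj (A X : {set T}) (h : A \subset X) (x : taxon X) :
  val x \in A -> {xa : taxon A | x = incl h xa}.
Proof. by move=> xA; exists (exist _ (val x) xA); apply: val_inj. Qed.

Definition slice (X A B : {set T}) (hAX : A \subset X) (hBX : B \subset X)
  (P : tensor R k X) (t : index_of k B) : tensor R k A :=
  [ffun s => \sum_(w | (proj hAX w == s) && (proj hBX w == t)) P w].

Section Sides.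
Variables (X A B : {set T}) (hAX : A \subset X) (hBX : B \subset X)
  (hX : X \subset A :|: B) (hdis : [disjoint A & B]).

Lemma in_AB (x : taxon X) : (val x \in A) || (val x \in B).
Proof. by rewrite -in_setU; apply: (subsetP hX); apply: valP. Qed.

Lemma notinB (x : T) : x \in A -> x \notin B.
Proof. by move=> xA; rewrite (disjointFr hdis xA). Qed.

Lemma agree_split Y u w : agree Y u w =
  agree Y (proj hAX u) (proj hAX w) && agree Y (proj hBX u) (proj hBX w).
Proof.
apply/forallP/andP => [H|[/forallP HA /forallP HB] x].
  by split; apply/forallP => x; rewrite !ffunE; apply: (H (incl _ x)).
case/orP: (in_AB x) => /incl_surj [xa ->].
  by have := HA xa; rewrite !ffunE.
by have := HB xa; rewrite !ffunE.
Qed.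

Lemma proj_inj u w : proj hAX u = proj hAX w -> proj hBX u = proj hBX w -> u = w.
Proof.
move=> HA HB; apply/ffunP => x; case/orP: (in_AB x) => /incl_surj [xa ->].
  by have := congr1 (fun f : index_of k A => f xa) HA; rewrite !ffunE.
by have := congr1 (fun f : index_of k B => f xa) HB; rewrite !ffunE.
Qed.

Lemma sum_slice (Ca : pred (index_of k A)) (Cb : pred (index_of k B)) P :
  \sum_(t | Cb t) \sum_(s | Ca s) slice hAX hBX P t s =
  \sum_(w | Ca (proj hAX w) && Cb (proj hBX w)) P w.
Proof.
rewrite -(sum_partition (proj hBX)).
apply: eq_bigr => t Cbt.
under eq_bigr => s _ do rewrite ffunE.
rewrite (eq_bigr (fun s => \sum_(w | (proj hBX w == t) && (proj hAX w == s)) P w)).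
  rewrite (sum_partition (proj hAX)); apply: eq_bigl => w.
  by rewrite andbC.
by move=> s _; apply: eq_bigl => w; rewrite andbC.
Qed.

Lemma marg_slice Y P w : marg P Y w =
  \sum_(t | agree Y t (proj hBX w)) marg (slice hAX hBX P t) Y (proj hAX w).
Proof.
rewrite (sum_slice (fun s => agree Y s (proj hAX w)) (fun t => agree Y t (proj hBX w))).
by rewrite margE; apply: eq_bigl => u; rewrite agree_split.
Qed.

Lemma proj_swap_in (a b : taxon A) w :
  proj hAX (swap_idx (incl hAX a) (incl hAX b) w) = swap_idx a b (proj hAX w).
Proof.
by apply/ffunP => x; rewrite !ffunE (tperm_inj (@incl_inj _ _ hAX)).
Qed.

Lemma proj_swap_out (a b : taxon X) w : val a \notin B -> val b \notin B ->
  proj hBX (swap_idx a b w) = proj hBX w.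
Proof.
move=> aB bB; apply/ffunP => y; rewrite !ffunE tpermD //.
  by apply/eqP => E; move: aB; rewrite E /= (valP y).
by apply/eqP => E; move: bB; rewrite E /= (valP y).
Qed.

Lemma marg_full Y P w : marg P (Y :|: B) w = marg (slice hAX hBX P (proj hBX w)) Y (proj hAX w).
Proof.
rewrite marg_slice (eq_bigl (pred1 (proj hBX w))) ?big_pred1_eq.
  rewrite !margE; apply: eq_bigl => u; rewrite (@agree_eq A (Y :|: B) Y) // => x.
  by rewrite in_setU (negbTE (notinB (valP x))) orbF.
move=> t; apply/forallP/eqP => [H|->]; last by move=> x; rewrite eqxx implybT.
apply/ffunP => y; have := H y; rewrite in_setU (valP y) orbT /=.
by move/eqP.
Qed.

Lemma card_taxon (Z : {set T}) : #|{: taxon Z}| = #|Z|.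
Proof. by rewrite card_sig. Qed.

Lemma pr_bij (hk : (0 < k)%N) :
  bijective (fun w : index_of k X => (proj hAX w, proj hBX w)).
Proof.
apply: inj_card_bij => [u w [HA HB]|]; first exact: proj_inj.
rewrite card_prod !card_ffun !card_taxon !card_ord -expnD leq_pexp2l //.
have -> : (#|A| + #|B| = #|A :|: B|)%N by rewrite cardsU (disjoint_setI0 hdis) cards0 subn0.
by apply: subset_leq_card; rewrite subUset hAX hBX.
Qed.

End Sides.
End Generic.

Section TreeGen.
Variables (T : finType) (R : realType) (k : nat).

Lemma marg_lin (Z : {set T}) (x : R) (P Q : tensor R k Z) Y w :
  marg (x *: P + Q) Y w = x * marg P Y w + marg Q Y w.
Proof.
rewrite /marg mulr_sumr -big_split; apply: eq_bigr => u _.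
by rewrite !ffunE.
Qed.

Lemma sym_defect_lin (Z : {set T}) c : linear (@sym_defect T R k Z c).
Proof.
case: c => [[[Y a] b] w] x P Q /=; rewrite !marg_lin /GRing.scale /=.
ring.
Qed.

Lemma memLP (t : rtree T) (P : tensor R k (taxa_set t)) :
  reflect (forall c, is_constraint c -> sym_defect c P = 0) (P \in Lspace R k t).
Proof.
apply: (iffP (memv_bigcapP _ _ _)) => H c hc; have E := linfunE' (sym_defect_lin c) P.
  by move: (H c hc); rewrite memv_ker E => /eqP.
by rewrite memv_ker E H.
Qed.

Section TreeSide.
Variables (t tS : rtree T) (B : {set T}) (hAX : taxa_set tS \subset taxa_set t)
  (hBX : B \subset taxa_set t) (hX : taxa_set t \subset taxa_set tS :|: B)
  (hdis : [disjoint taxa_set tS & B])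
  (hcl : forall Y a b, is_2clade_opt (restrict Y tS) a b -> is_2clade_opt (restrict Y t) a b).

Lemma side1 (hk : (0 < k)%N) P : P \in Lspace R k t ->
  forall tt, slice hAX hBX P tt \in Lspace R k tS.
Proof.
move=> /memLP hP tt; apply/memLP => [[[[Y a] b] s]] /and4P[hYA haY hbY hc] /=.
have [g pg gp] := pr_bij hAX hBX hX hdis hk.
set w := g (s, tt).
have [ws wt] : proj hAX w = s /\ proj hBX w = tt by rewrite /w; have := gp (s, tt); case.
have := hP (Y :|: B, incl hAX a, incl hAX b, w).
rewrite /= !(marg_full hAX hBX hX hdis) proj_swap_in proj_swap_out ?ws ?wt; last first.
- by apply: (notinB hdis); apply: (valP b).
- by apply: (notinB hdis); apply: (valP a).
apply; rewrite /is_constraint /= !in_setU haY hbY /=.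
rewrite subUset (subset_trans hYA hAX) hBX /=.
apply: hcl; rewrite (@eq_restrict _ _ Y) // => x xin.
rewrite in_setU (negbTE (notinB hdis _)) ?orbF //.
by rewrite /taxa_set inE.
Qed.

Lemma side2 P (hS : forall tt, slice hAX hBX P tt \in Lspace R k tS) Y
  (a b : taxon (taxa_set t)) w :
  is_2clade_opt (restrict Y tS) (val a) (val b) -> marg P Y w = marg P Y (swap_idx a b w).
Proof.
case Er: (restrict Y tS) => [t'|] //= hc.
have /andP[ha hb] := is_2clade_mem hc.
have /andP[haY haL] := mem_restrict Er ha.
have /andP[hbY hbL] := mem_restrict Er hb.
have aA' : val a \in taxa_set tS by rewrite inE.
have bA' : val b \in taxa_set tS by rewrite inE.
have [aA Ea] := incl_surj hAX aA'; subst a.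
have [bA Eb] := incl_surj hAX bA'; subst b.
move: haY hbY; rewrite /= => haY hbY.
rewrite !(marg_slice hAX hBX hX) proj_swap_in proj_swap_out; first last.
- by apply: (notinB hdis); apply: (valP bA).
- by apply: (notinB hdis); apply: (valP aA).
apply: eq_bigr => tt _.
have /memLP := hS tt.
move/(_ (Y :&: taxa_set tS, aA, bA, proj hAX w)) => /=.
rewrite !margI => H; apply/eqP; rewrite -subr_eq0; apply/eqP; apply: H.
rewrite /is_constraint /= subsetIr !in_setI (valP aA) (valP bA) /= haY hbY /=.
rewrite (@eq_restrict _ _ Y) ?Er // => x xin.
by rewrite in_setI /taxa_set inE xin andbT.
Qed.

End TreeSide.

Lemma marg1_eq (t : rtree T) (hu : uniq (leaves t)) (f : tensor R k (taxa_set t)) :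
  f \in Lspace R k t -> forall (a a' : taxon (taxa_set t)) (x : 'I_k),
  \sum_(s : index_of k (taxa_set t) | s a == x) f s = \sum_(s : index_of k (taxa_set t) | s a' == x) f s.
Proof.
move=> /memLP hf a a' x.
have [->//|ne] := eqVneq a a'.
set Y := [set val a; val a'].
have la (z : taxon (taxa_set t)) : val z \in leaves t by have := valP z; rewrite inE.
have hag u w : agree Y u w = (u a == w a) && (u a' == w a').
  apply/forallP/andP => [H|[/eqP E1 /eqP E2] z].
    split; [have := H a | have := H a']; rewrite !inE eqxx ?orbT //=.
  apply/implyP; rewrite !inE => /orP[] /eqP /val_inj ->; apply/eqP => //.
have hs : perm_eq [seq z <- leaves t | z \in Y] [:: val a; val a'].
  apply: uniq_perm; first by rewrite filter_uniq.
    by rewrite /= inE andbT; apply: ne.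
  move=> z; rewrite mem_filter !inE; apply/andP/idP => [[]//|H]; split=> //.
  by case/orP: H => /eqP->.
have hcl : is_2clade_opt (restrict Y t) (val a) (val a').
  have := perm_size hs.
  case E: [seq z <- leaves t | z \in Y] => [|u [|v [|? ?]]] //= _.
  rewrite (restrict_two E) /=; apply: cherry_clade; last exact: ne.
    by rewrite -E (perm_mem hs) inE eqxx.
  by rewrite -E (perm_mem hs) !inE eqxx orbT.
have key (x1 y1 : 'I_k) : \sum_(s : index_of k (taxa_set t) | (s a == x1) && (s a' == y1)) f s =
    \sum_(s : index_of k (taxa_set t) | (s a == y1) && (s a' == x1)) f s.
  pose w : index_of k (taxa_set t) := [ffun z => if z == a then x1 else y1].
  have wa : w a = x1 by rewrite ffunE eqxx.
  have wa' : w a' = y1 by rewrite ffunE eq_sym (negbTE ne).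
  have := hf (Y, a, a', w); rewrite /= !margE => H.
  have E1 : \sum_(u | agree Y u w) f u = \sum_(s : index_of k (taxa_set t) | (s a == x1) && (s a' == y1)) f s.
    by apply: eq_bigl => s; rewrite hag wa wa'.
  have E2 : \sum_(u | agree Y u (swap_idx a a' w)) f u = \sum_(s : index_of k (taxa_set t) | (s a == y1) && (s a' == x1)) f s.
    by apply: eq_bigl => s; rewrite hag [swap_idx _ _ _ a]ffunE [swap_idx _ _ _ a']ffunE tpermL tpermR wa wa'.
  rewrite -E1 -E2; apply/eqP; rewrite -subr_eq0; apply/eqP; apply: H.
  rewrite /is_constraint /= !inE !eqxx ?orbT /= hcl andbT.
  by apply/subsetP => z; rewrite !inE => /orP[]/eqP->; apply: la.
transitivity (\sum_(y : 'I_k) \sum_(s : index_of k (taxa_set t) | (s a == x) && (s a' == y)) f s).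
  by rewrite (sum_partition (fun s : index_of k (taxa_set t) => s a') (fun _ => true)); apply: eq_bigl => s; rewrite andbT.
transitivity (\sum_(y : 'I_k) \sum_(s : index_of k (taxa_set t) | (s a' == x) && (s a == y)) f s).
  by apply: eq_bigr => y _; rewrite key; apply: eq_bigl => s; rewrite andbC.
by rewrite (sum_partition (fun s : index_of k (taxa_set t) => s a) (fun _ => true)); apply: eq_bigl => s; rewrite andbT.
Qed.

Lemma cst_in_L (t : rtree T) (i : 'I_k) :
  [ffun s : index_of k (taxa_set t) => ((s == [ffun => i])%:R : R^o)] \in Lspace R k t.
Proof.
apply/memLP => [[[[Y a] b] w]] /and4P[_ haY hbY _] /=; rewrite !margE.
under eq_bigr do rewrite ffunE.
under [X in _ - X]eq_bigr do rewrite ffunE.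
rewrite !sum_ind.
suff -> : agree Y [ffun=> i] w = agree Y [ffun=> i] (swap_idx a b w) by rewrite subrr.
have inY z : val z \in Y -> val (tperm a b z) \in Y.
  by move=> zY; case: tpermP.
apply/forallP/forallP => H z; apply/implyP => zY.
  by have := H (tperm a b z); rewrite inY // !ffunE.
have := H (tperm a b z); rewrite inY // !ffunE tpermK //.
Qed.

End TreeGen.

Lemma card_pairs k : #|{: {p : 'I_k * 'I_k | (p.1 < p.2)%N}}| = 'C(k, 2).
Proof.
rewrite card_sig -bin2_sum big_mkord -sum1_card.
rewrite -(pair_big_dep (fun _ : 'I_k => true) (fun (i j : 'I_k) => (i < j)%N) (fun _ _ => 1%N)) /=.
rewrite (exchange_big_dep xpredT) //=.
apply: eq_bigr => j _.
rewrite (big_ord_narrow_cond (P := xpredT) (ltnW (ltn_ord j))) /= sum1_card card_ord //.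
Qed.

Lemma agree1 (T : finType) (k : nat) (Z Y : {set T}) (z0 : taxon Z)
  (H : forall x : taxon Z, (val x \in Y) = (x == z0)) (u w : index_of k Z) :
  agree Y u w = (u z0 == w z0).
Proof.
apply/forallP/idP => [H'| /eqP E x]; first by have := H' z0; rewrite H eqxx.
by rewrite H; apply/implyP => /eqP ->; rewrite E.
Qed.

Section Main.
Variables (R : realType) (T : finType) (k : nat) (hk : (2 <= k)%N) (tA tB : rtree T)
  (hu : uniq (leaves (Node tA tB))).
Local Notation X := (taxa_set (Node tA tB)).
Local Notation A := (taxa_set tA).
Local Notation B := (taxa_set tB).
Variables (a0 : taxon A) (b0 : taxon B).

Lemma hk0 : (0 < k)%N. Proof. by apply: leq_trans hk. Qed.
Lemma hAX : A \subset X.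
Proof. by apply/subsetP => x; rewrite !inE mem_cat => ->. Qed.
Lemma hBX : B \subset X.
Proof. by apply/subsetP => x; rewrite !inE mem_cat => ->; rewrite orbT. Qed.
Lemma hX : X \subset A :|: B.
Proof. by apply/subsetP => x; rewrite !inE mem_cat. Qed.
Lemma hX' : X \subset B :|: A.
Proof. by rewrite setUC hX. Qed.
Lemma hdis : [disjoint A & B].
Proof.
move: hu; rewrite /= cat_uniq => /and3P[_ /hasPn H _].
rewrite -setI_eq0; apply/eqP/setP => x; rewrite !inE.
by apply/negP => /andP[xA /H]; rewrite xA.
Qed.
Lemma hdis' : [disjoint B & A].
Proof. by rewrite disjoint_sym hdis. Qed.
Lemma huA : uniq (leaves tA).
Proof. by move: hu; rewrite /= cat_uniq => /and3P[]. Qed.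
Lemma huB : uniq (leaves tB).
Proof. by move: hu; rewrite /= cat_uniq => /and3P[]. Qed.

Local Notation pA := (proj hAX).
Local Notation pB := (proj hBX).
Local Notation sliceA := (slice hAX hBX).
Local Notation sliceB := (slice hBX hAX).

Definition Gf (P : tensor R k X) (a : taxon A) (b : taxon B) (x y : 'I_k) :=
  \sum_(w | (pA w a == x) && (pB w b == y)) P w.

Lemma G_ind P (hA : forall tt, sliceA P tt \in Lspace R k tA)
  (hB : forall s, sliceB P s \in Lspace R k tB) a b x y :
  Gf P a b x y = Gf P a0 b0 x y.
Proof.
rewrite /Gf -(sum_slice hAX hBX (fun s => s a == x) (fun tt => tt b == y)).
under eq_bigr => tt _ do rewrite (marg1_eq huA (hA tt) a a0).
rewrite (sum_slice hAX hBX (fun s => s a0 == x) (fun tt => tt b == y)).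
rewrite (eq_bigl (fun w => (pB w b == y) && (pA w a0 == x))); last by move=> w; rewrite andbC.
rewrite -(sum_slice hBX hAX (fun tt => tt b == y) (fun s => s a0 == x)).
under eq_bigr => s _ do rewrite (marg1_eq huB (hB s) b b0).
rewrite (sum_slice hBX hAX (fun tt => tt b0 == y) (fun s => s a0 == x)).
by apply: eq_bigl => w; rewrite andbC.
Qed.

Lemma margAB P (hA : forall tt, sliceA P tt \in Lspace R k tA)
  (hB : forall s, sliceB P s \in Lspace R k tB) Y (a b : taxon X) :
  restrict Y tA = Some (Leaf (val a)) -> restrict Y tB = Some (Leaf (val b)) ->
  forall w, marg P Y w = Gf P a0 b0 (w a) (w b).
Proof.
move=> rA rB w.
have la : val a \in A.
  by have /andP[_ ] := mem_restrict rA (mem_head _ _); rewrite inE.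
have lb : val b \in B.
  by have /andP[_ ] := mem_restrict rB (mem_head _ _); rewrite inE.
have [aA Ea] := incl_surj hAX la.
have [bB Eb] := incl_surj hBX lb.
have chA (x : taxon A) : (val x \in Y) = (x == aA).
  have := restrict_leaves Y tA; rewrite rA /= => E.
  have xl : val x \in leaves tA by have := valP x; rewrite inE.
  by rewrite -[x == aA]/(val x == val aA) -[val aA]/(val (incl hAX aA)) -Ea -mem_seq1 E mem_filter xl andbT.
have chB (x : taxon B) : (val x \in Y) = (x == bB).
  have := restrict_leaves Y tB; rewrite rB /= => E.
  have xl : val x \in leaves tB by have := valP x; rewrite inE.
  by rewrite -[x == bB]/(val x == val bB) -[val bB]/(val (incl hBX bB)) -Eb -mem_seq1 E mem_filter xl andbT.
rewrite -(G_ind hA hB aA bB) margE /Gf; apply: eq_bigl => u.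
rewrite (agree_split hAX hBX hX) (agree1 chA) (agree1 chB) !ffunE.
by rewrite -Ea -Eb.
Qed.

Local Notation Mat := {ffun (index_of k A * index_of k B)%type -> R^o}.
Local Notation Pairs := {p : 'I_k * 'I_k | (p.1 < p.2)%N}.

Definition Dm (M : Mat) (x y : 'I_k) :=
  \sum_(q : (index_of k A * index_of k B)%type | (q.1 a0 == x) && (q.2 b0 == y)) M q.
Definition Delta (M : Mat) : {ffun Pairs -> R^o} :=
  [ffun p => Dm M (val p).1 (val p).2 - Dm M (val p).2 (val p).1].
Definition Phi (M : Mat) : tensor R k X := [ffun w => M (pA w, pB w)].

Lemma Delta_lin : linear Delta.
Proof.
move=> c M N; apply/ffunP => p; rewrite !ffunE /Dm.
have hs (C : pred (index_of k A * index_of k B)%type) :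
  \sum_(q | C q) (c *: M + N) q = c * \sum_(q | C q) M q + \sum_(q | C q) N q.
  by rewrite mulr_sumr -big_split; apply: eq_bigr => q _; rewrite !ffunE.
rewrite !hs /GRing.scale /=; ring.
Qed.

Lemma Phi_lin : linear Phi.
Proof. by move=> c M N; apply/ffunP => w; rewrite !ffunE. Qed.

Definition Wm := Wsp (Lspace R k tA) (Lspace R k tB).
Definition Sm := (Wm :&: lker (linfun Delta))%VS.

Lemma slice_Phi M tt : sliceA (Phi M) tt = colf tt M.
Proof.
have [g pg gp] := pr_bij hAX hBX hX hdis hk0.
apply/ffunP => s; rewrite !ffunE (eq_bigl (pred1 (g (s, tt)))) ?big_pred1_eq.
  by rewrite ffunE; move: (gp (s, tt)) => /= [-> ->].
move=> w /=; apply/andP/eqP => [[/eqP E1 /eqP E2]|->].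
  by rewrite -E1 -E2 pg.
by move: (gp (s, tt)) => /= [-> ->].
Qed.

Lemma sliceB_Phi M s : sliceB (Phi M) s = rowf s M.
Proof.
have [g pg gp] := pr_bij hAX hBX hX hdis hk0.
apply/ffunP => tt; rewrite !ffunE (eq_bigl (pred1 (g (s, tt)))) ?big_pred1_eq.
  by rewrite ffunE; move: (gp (s, tt)) => /= [-> ->].
move=> w /=; apply/andP/eqP => [[/eqP E1 /eqP E2]|->].
  by rewrite -E1 -E2 pg.
by move: (gp (s, tt)) => /= [-> ->].
Qed.

Lemma G_Phi M x y : Gf (Phi M) a0 b0 x y = Dm M x y.
Proof.
rewrite /Dm (reindex (fun w : index_of k X => (pA w, pB w))) /=.
  by apply: eq_bigr => w _; rewrite ffunE.
exact: onW_bij (pr_bij hAX hBX hX hdis hk0).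
Qed.

Lemma Dsym M : Delta M = 0 -> forall x y, Dm M x y = Dm M y x.
Proof.
move=> H x y; case: (ltngtP x y) => [lt|gt|eq].
- have := congr1 (fun f : {ffun Pairs -> R^o} => f (exist _ (x, y) lt)) H.
  by rewrite !ffunE /= => /eqP; rewrite subr_eq0 => /eqP.
- have := congr1 (fun f : {ffun Pairs -> R^o} => f (exist _ (y, x) gt)) H.
  by rewrite !ffunE /= => /eqP; rewrite subr_eq0 => /eqP.
- by rewrite (val_inj eq).
Qed.

Lemma Phi_in M : M \in Sm -> Phi M \in Lspace R k (Node tA tB).
Proof.
case/memv_capP => /memWP [hc hr] hD.
have hD' : Delta M = 0 by move: hD; rewrite memv_ker (linfunE' Delta_lin) => /eqP.
have hA tt : sliceA (Phi M) tt \in Lspace R k tA by rewrite slice_Phi; apply: hc.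
have hB s : sliceB (Phi M) s \in Lspace R k tB by rewrite sliceB_Phi; apply: hr.
apply/memLP => [[[[Y a] b] w]] /and4P[_ _ _ hcl] /=.
apply/eqP; rewrite subr_eq0; apply/eqP.
case: (clade_node_inv hcl) => [h1|h2|[r1 r2]|[r1 r2]].
- exact: (side2 hX hdis hA w h1).
- exact: (side2 hX' hdis' hB w h2).
- rewrite !(margAB hA hB r1 r2) [swap_idx _ _ _ a]ffunE [swap_idx _ _ _ b]ffunE tpermL tpermR.
  by rewrite !G_Phi; apply: Dsym.
- rewrite !(margAB hA hB r1 r2) [swap_idx _ _ _ a]ffunE [swap_idx _ _ _ b]ffunE tpermL tpermR.
  by rewrite !G_Phi; apply: Dsym.
Qed.

Lemma Psi_in P : P \in Lspace R k (Node tA tB) -> exists2 M, M \in Sm & P = Phi M.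
Proof.
move=> hP; have [g pg gp] := pr_bij hAX hBX hX hdis hk0.
pose M : Mat := [ffun q => P (g q)].
have PM : Phi M = P by apply/ffunP => w; rewrite !ffunE pg.
exists M; last by rewrite PM.
have hA tt : sliceA P tt \in Lspace R k tA :=
  side1 hAX hBX hX hdis (fun Y a b => @clade_node_l T Y tA tB a b) hk0 hP tt.
have hB s : sliceB P s \in Lspace R k tB :=
  side1 hBX hAX hX' hdis' (fun Y a b => @clade_node_r T Y tA tB a b) hk0 hP s.
apply/memv_capP; split.
  by apply/memWP; split => [tt|s]; [rewrite -slice_Phi PM; apply: hA | rewrite -sliceB_Phi PM; apply: hB].
rewrite memv_ker (linfunE' Delta_lin); apply/eqP/ffunP => p; rewrite !ffunE.
suff sym x y : Dm M x y = Dm M y x by rewrite sym subrr.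
rewrite -!G_Phi PM.
set Y0 := [set val (incl hAX a0); val (incl hBX b0)].
have la0 : val a0 \in leaves tA by have := valP a0; rewrite inE.
have lb0 : val b0 \in leaves tB by have := valP b0; rewrite inE.
have nb0 : val b0 \notin leaves tA.
  by have := notinB hdis' (valP b0); rewrite inE.
have na0 : val a0 \notin leaves tB.
  by have := notinB hdis (valP a0); rewrite inE.
have rA : restrict Y0 tA = Some (Leaf (val (incl hAX a0))).
  apply: restrict_single; rewrite (@eq_in_filter _ _ (pred1 (val a0))) ?filter_pred1_uniq //.
    exact: huA.
  move=> z zl; rewrite /= !inE; case: (z =P val b0) => [E|]; last by rewrite orbF.
  by move: nb0; rewrite -E zl.
have rB : restrict Y0 tB = Some (Leaf (val (incl hBX b0))).
  apply: restrict_single; rewrite (@eq_in_filter _ _ (pred1 (val b0))) ?filter_pred1_uniq //.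
    exact: huB.
  move=> z zl; rewrite /= !inE; case: (z =P val a0) => [E|]; last by [].
  by move: na0; rewrite -E zl.
pose w := g ([ffun => x], [ffun => y]).
have wa : w (incl hAX a0) = x.
  have := gp ([ffun => x], [ffun => y]); case=> E _.
  by have := congr1 (fun f : index_of k A => f a0) E; rewrite !ffunE.
have wb : w (incl hBX b0) = y.
  have := gp ([ffun => x], [ffun => y]); case=> _ E.
  by have := congr1 (fun f : index_of k B => f b0) E; rewrite !ffunE.
have := memLP _ hP (Y0, incl hAX a0, incl hBX b0, w) => /=.
rewrite !(margAB hA hB rA rB) [swap_idx _ _ _ (incl hAX a0)]ffunE [swap_idx _ _ _ (incl hBX b0)]ffunE.
rewrite tpermL tpermR wa wb => H; apply/eqP; rewrite -subr_eq0; apply/eqP; apply: H.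
rewrite /is_constraint /= !inE !eqxx ?orbT /= rA rB /= !eqxx andbT.
rewrite orTb andbT.
by apply/subsetP => z; rewrite /Y0 !inE => /orP[]/eqP->; rewrite mem_cat ?la0 ?lb0 ?orbT.
Qed.

Lemma Lspace_eq : Lspace R k (Node tA tB) = (linfun Phi @: Sm)%VS.
Proof.
apply/vspaceP => P; apply/idP/memv_imgP => [hP|[M hM ->]].
  by have [M hM ->] := Psi_in hP; exists M => //; rewrite (linfunE' Phi_lin).
by rewrite (linfunE' Phi_lin); apply: Phi_in.
Qed.

Lemma Phi_ker : lker (linfun Phi) == 0%VS.
Proof.
have [g pg gp] := pr_bij hAX hBX hX hdis hk0.
apply/lker0P => M N; rewrite !(linfunE' Phi_lin) => E; apply/ffunP => q.
by have := congr1 (fun f : tensor R k X => f (g q)) E; rewrite !ffunE gp.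
Qed.

Lemma Delta_full : (linfun Delta @: Wm)%VS = fullv.
Proof.
apply/eqP; rewrite eqEsubv subvf /=; apply/subvP => f _.
have -> : f = \sum_(p : Pairs) f p *: [ffun p' => ((p' == p)%:R : R^o)].
  apply/ffunP => p; rewrite sum_ffunE (bigD1 p) //= big1 => [|p' ne].
    by rewrite !ffunE eqxx /GRing.scale /= mulr1 addr0.
  by rewrite !ffunE eq_sym (negbTE ne) /GRing.scale /= mulr0.
apply: memv_suml => p _; apply: memvZ; apply/memv_imgP.
case: p => [[i j] lt] /=.
pose cA : index_of k A := [ffun => i].
pose cB : index_of k B := [ffun => j].
exists [ffun q : (index_of k A * index_of k B)%type => ((q.1 == cA) && (q.2 == cB))%:R].
  apply/memWP; split => [tt|s].
    have -> : colf tt [ffun q : (index_of k A * index_of k B)%type => ((q.1 == cA) && (q.2 == cB))%:R]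
      = ((tt == cB)%:R : R) *: [ffun s : index_of k A => ((s == [ffun => i])%:R : R^o)].
      by apply/ffunP => s; rewrite !ffunE /GRing.scale /= -natrM mulnb andbC.
    by apply: memvZ; apply: cst_in_L.
  have -> : rowf s [ffun q : (index_of k A * index_of k B)%type => ((q.1 == cA) && (q.2 == cB))%:R]
    = ((s == cA)%:R : R) *: [ffun tt : index_of k B => ((tt == [ffun => j])%:R : R^o)].
    by apply/ffunP => tt; rewrite !ffunE /GRing.scale /= -natrM mulnb.
  by apply: memvZ; apply: cst_in_L.
rewrite (linfunE' Delta_lin); apply/ffunP => p; rewrite !ffunE /Dm.
have hD x y : \sum_(q : (index_of k A * index_of k B)%type | (q.1 a0 == x) && (q.2 b0 == y))
    [ffun q : (index_of k A * index_of k B)%type => (((q.1 == cA) && (q.2 == cB))%:R : R^o)] q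
    = ((i == x) && (j == y))%:R.
  rewrite (eq_bigr (fun q => ((q == (cA, cB))%:R : R))); last first.
    by move=> [s t] _; rewrite ffunE /= xpair_eqE.
  by rewrite sum_ind /= !ffunE.
rewrite !hD; case: p => [[x y] lxy] /=.
have -> : (i == y) && (j == x) = false.
  apply/negP => /andP[/eqP E1 /eqP E2]; move: lt lxy; rewrite E1 E2 => l1 l2.
  by have := ltn_trans l1 l2; rewrite ltnn.
rewrite subr0; congr (_%:R).
by rewrite -[_ == _]/((x, y) == (i, j)) xpair_eqE (eq_sym x) (eq_sym y).
Qed.

Lemma dim_main :
  (c_kappa R k (Node tA tB) + 'C(k, 2) = c_kappa R k tA * c_kappa R k tB)%N.
Proof.
rewrite /c_kappa Lspace_eq limg_dim_eq; last by rewrite (eqP Phi_ker) capv0.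
rewrite -(dimW (Lspace R k tA) (Lspace R k tB)) -/Wm -(limg_ker_dim (linfun Delta) Wm).
by rewrite Delta_full dimvf /dim /= muln1 card_pairs.
Qed.

End Main.

Theorem theorem4p1 (R : realType) (T : finType) (k : nat) (hk : (2 <= k)%N)
  (tA tB : rtree T) (huniq : uniq (leaves (Node tA tB))) :
  ((c_kappa R k (Node tA tB))%:Z
   = (c_kappa R k tA * c_kappa R k tB)%:Z - ('C(k, 2))%:Z)%R.
Proof.
have hA0 : exists a0 : taxon (taxa_set tA), true.
  have := size_leaves tA; case El: (leaves tA) => [|x s] // _.
  have xin : x \in taxa_set tA by rewrite inE El mem_head.
  by exists (exist _ x xin).
have hB0 : exists b0 : taxon (taxa_set tB), true.
  have := size_leaves tB; case El: (leaves tB) => [|x s] // _.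
  have xin : x \in taxa_set tB by rewrite inE El mem_head.
  by exists (exist _ x xin).
case: hA0 => a0 _; case: hB0 => b0 _.
rewrite -(dim_main R hk huniq a0 b0) PoszD addrK //.
Qed.
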